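(* Let $0<p<1$ and let $G$ be a simple graph with $m$ edges. Then $\mathcal{E}_p(G) \geq 2m^{p/2}$.
   Context: For a graph $G$ with adjacency eigenvalues $\lambda_1,\dots,\lambda_n$ and $p>0$, the $p$-energy is $\mathcal{E}_p(G) = \sum_{i=1}^n |\lambda_i|^p$. *)

(* Defs.v *)
From HB Require Import structures.
From mathcomp Require Import all_boot all_order all_algebra.
From mathcomp Require Import all_classical all_reals all_analysis.
Set Implicit Arguments. Unset Strict Implicit. Unset Printing Implicit Defensive.
Import Order.TTheory GRing.Theory Num.Theory.
Local Open Scope ring_scope.

Definition simple_graph (n : nat) (e : rel 'I_n) : Prop :=
  symmetric e /\ irreflexive e.

Definition num_edges (n : nat) (e : rel 'I_n) : nat :=
  #|[set ij : 'I_n * 'I_n | (ij.1 < ij.2)%N && e ij.1 ij.2]|.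

Definition adjmx (R : nzRingType) (n : nat) (e : rel 'I_n) : 'M[R]_n :=
  \matrix_(i, j) (e i j)%:R.

(* s is the list of eigenvalues (with multiplicity) of A:
   the characteristic polynomial of A splits as prod_(x in s) (X - x). *)
Definition is_eigenvalue_list (R : comNzRingType) (n : nat) (A : 'M[R]_n)
    (s : seq R) : Prop :=
  char_poly A = \prod_(x <- s) ('X - x%:P).

Definition p_energy (R : realType) (s : seq R) (p : R) : R :=
  \sum_(x <- s) (`|x| `^ p).

(* Main.v *)
Require Import Defs.
From HB Require Import structures.
From mathcomp Require Import all_boot all_order all_algebra.
From mathcomp Require Import all_classical all_reals all_analysis.
From mathcomp Require Import ring lra.
Import Order.TTheory GRing.Theory Num.Theory.
Local Open Scope ring_scope.

Lemma coefX_prod_XsubC (R : comNzRingType) (d : seq R) :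
  ('X * \prod_(x <- d) ('X - x%:P))`_(size d) = - \sum_(x <- d) x.
Proof.
elim: d => [|x d IHd].
  by rewrite !big_nil mulr1 coefX oppr0.
rewrite !big_cons coefXM mulrBl coefB IHd opprD addrC; congr (- _ + _).
rewrite mul_polyC coefZ [size _]/= -(size_prod_XsubC _ id) -lead_coefE.
by rewrite (monicP _) ?monic_prod_XsubC ?mulr1.
Qed.

Lemma trace_eig (R : comNzRingType) n (M : 'M[R]_n) (s : seq R) :
  char_poly M = \prod_(x <- s) ('X - x%:P) -> \tr M = \sum_(x <- s) x.
Proof.
move=> hM.
have sz : size s = n.
  by move: (size_char_poly M); rewrite hM size_prod_XsubC => -[].
case: n M hM sz => [|n] M hM sz.
  case: s hM sz => // _ _.
  by rewrite big_nil /mxtrace big_ord0.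
have := char_poly_trace M (ltn0Sn n); rewrite hM /=.
have ->: (\prod_(x <- s) ('X - x%:P))`_n =
   ('X * \prod_(x <- s) ('X - x%:P))`_(size s) by rewrite coefXM sz.
by rewrite coefX_prod_XsubC => /oppr_inj.
Qed.

Lemma prod_sq_id (R : comNzRingType) (s : seq R) :
  \prod_(x <- s) ('X - x%:P) * ((-1) ^+ size s * (\prod_(x <- s) ('X - x%:P) \Po (- 'X)))
  = \prod_(x <- s) ('X - (x * x)%:P) \Po 'X^2.
Proof.
elim: s => [|x s IH].
  by rewrite !big_nil /= expr0 -polyC1 !comp_polyC !mul1r.
rewrite !big_cons /= !comp_polyM exprS -IH !comp_polyB !comp_polyX !comp_polyC polyCM.
ring.
Qed.

Lemma sq_char (R : idomainType) n (A : 'M[R]_n) (s : seq R) :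
  char_poly A = \prod_(x <- s) ('X - x%:P) ->
  char_poly (A *m A) = \prod_(x <- s) ('X - (x * x)%:P).
Proof.
move=> hA.
have sz : size s = n.
  by move: (size_char_poly A); rewrite hA size_prod_XsubC => -[].
apply/eqP; rewrite -subr_eq0 -(comp_poly_eq0 _ (q := 'X^2)) ?size_polyXn //.
rewrite comp_polyB subr_eq0; apply/eqP.
set A' := map_mx polyC A.
have E1 : map_mx (comp_poly 'X^2) (char_poly_mx (A *m A)) =
   ('X^2)%:M - map_mx polyC (A *m A).
  apply/matrixP => i j; rewrite !mxE comp_polyB comp_polyC.
  by case: (i == j); rewrite ?mulr1n ?mulr0n ?comp_polyX ?comp_polyC.
have E1' : ('X^2)%:M - map_mx polyC (A *m A) = (char_poly_mx A) *m ('X%:M + A').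
  rewrite /char_poly_mx map_mxM -/A' mulmxBl !mulmxDr -scalar_mxM scalar_mxC.
  by rewrite opprD addrA addrK expr2.
rewrite E1' in E1.
have E2 : 'X%:M + A' = (-1) *: map_mx (comp_poly (- 'X)) (char_poly_mx A).
  apply/matrixP => i j; rewrite !mxE comp_polyB comp_polyC.
  by case: (i == j); rewrite ?mulr1n ?mulr0n ?comp_polyX ?comp_polyC; ring.
rewrite /char_poly -det_map_mx E1 det_mulmx E2 detZ det_map_mx -/(char_poly A) hA.
by rewrite -sz; apply: prod_sq_id.
Qed.

Lemma edges_nat n (e : rel 'I_n) : simple_graph e ->
  (\sum_(i : 'I_n) \sum_(j : 'I_n) (e i j : nat) = 2 * num_edges e)%N.
Proof.
move=> [sym irr].
have NE : num_edges e = (\sum_(i : 'I_n) \sum_(j : 'I_n) ((i < j)%N && e i j : nat))%N.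
  rewrite /num_edges -sum1_card big_mkcond pair_big /=.
  by apply: eq_bigr => -[i j] _; rewrite inE /=; case: (_ && _).
have S : (\sum_(i : 'I_n) \sum_(j : 'I_n) (e i j : nat) = \sum_(i : 'I_n) \sum_(j : 'I_n) ((i < j)%N && e i j : nat)
       + \sum_(i : 'I_n) \sum_(j : 'I_n) ((j < i)%N && e i j : nat))%N.
  rewrite -big_split; apply: eq_bigr => i _; rewrite -big_split; apply: eq_bigr => j _ /=.
  case: (ltngtP i j) => h; rewrite ?addn0 ?add0n //=.
  by have -> : i = j := val_inj h; rewrite irr.
rewrite S NE mul2n -addnn; congr (_ + _); rewrite exchange_big /=.
by apply: eq_bigr => i _; apply: eq_bigr => j _; rewrite sym.
Qed.

Lemma tr_adj (R : nzRingType) n (e : rel 'I_n) : simple_graph e -> \tr (adjmx R e) = 0.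
Proof. by move=> [_ irr]; apply: big1 => i _; rewrite mxE irr. Qed.

Lemma tr_adj2 (R : comNzRingType) n (e : rel 'I_n) : simple_graph e ->
  \tr (adjmx R e *m adjmx R e) = (2 * num_edges e)%:R.
Proof.
move=> G; rewrite -(@edges_nat _ _ G) natr_sum; apply: eq_bigr => i _.
rewrite mxE natr_sum; apply: eq_bigr => j _; rewrite !mxE.
by case: G => sym _; rewrite (sym j i); case: (e i j); rewrite ?mulr1 ?mulr0.
Qed.

Lemma energy_bound (R : realType) (p : R) (s : seq R) (m : nat) :
  0 < p -> p < 1 -> \sum_(x <- s) x = 0 ->
  \sum_(x <- s) x * x = (2 * m)%:R ->
  2 * (m%:R `^ (p / 2)) <= \sum_(x <- s) `|x| `^ p.
Proof.
move=> p0 p1 s0 s2.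
have sge0 : 0 <= \sum_(x <- s) `|x| `^ p by apply: sumr_ge0 => x _; apply: powR_ge0.
have p2 : p / 2 != 0 by rewrite mulf_neq0 // ?gt_eqF // invr_eq0.
case: m s2 => [|m] s2; first by rewrite powR0 // mulr0.
set T := (\sum_(x <- s) `|x|) / 2.
have T0 : 0 <= T by rewrite divr_ge0 // sumr_ge0.
have ST : \sum_(x <- s) `|x| = 2 * T by rewrite /T mulrC divfK // pnatr_eq0.
have hb : forall x, x \in s -> `|x| <= T.
  move=> x xs; move: s0; rewrite /T (big_rem x xs) /= (big_rem x xs (F := fun x => `|x|)) /=.
  move=> /eqP; rewrite addr_eq0 => /eqP hx.
  have h : `|\sum_(y <- rem x s) y| <= \sum_(y <- rem x s) `|y| := ler_norm_sum _ _ _.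
  rewrite -normrN -hx in h.
  rewrite ler_pdivlMr //; lra.
have hm : m.+1%:R <= T ^+ 2.
  have : (2 * m.+1)%:R <= \sum_(x <- s) `|x| * T.
    rewrite -s2 big_seq [X in _ <= X]big_seq; apply: ler_sum => x xs.
    by apply: le_trans (ler_norm (x * x)) _; rewrite normrM ler_wpM2l ?hb.
  by rewrite -mulr_suml natrM ST expr2 -mulrA ler_pM2l.
have Tpos : 0 < T.
  rewrite lt_neqAle T0 andbT; apply/eqP => T0'; move: hm; rewrite -T0' expr0n /=.
  by rewrite ler_nat.
have main : 2 * T `^ p <= \sum_(x <- s) `|x| `^ p.
  have -> : 2 * T `^ p = \sum_(x <- s) `|x| * (T `^ p / T).
    rewrite -mulr_suml ST; field; exact: lt0r_neq0.
  rewrite big_seq [X in _ <= X]big_seq; apply: ler_sum => x xs.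
  have [->|xn0] := eqVneq x 0.
    by rewrite normr0 mul0r powR_ge0.
  set u := `|x| / T.
  have ux : `|x| = u * T by rewrite /u divfK // gt_eqF.
  have u0 : 0 < u by rewrite divr_gt0 // normr_gt0.
  have u1 : u <= 1 by rewrite /u ler_pdivrMr // mul1r hb.
  have -> : `|x| * (T `^ p / T) = u * T `^ p.
    by rewrite /u mulrCA mulrC -mulrA [T^-1 * _]mulrC.
  rewrite ux (powRM p (ltW u0) T0) ler_wpM2r ?powR_ge0 //.
  by apply: ger1_powR; rewrite ?u0 ?u1 ?ltW.
apply: le_trans main; rewrite ler_pM2l //.
have -> : T `^ p = (T ^+ 2) `^ (p / 2).
  by rewrite -powR_mulrn // -powRrM mulrC divfK.
have h0 : 0 <= p / 2 by rewrite divr_ge0 ?ltW.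
by apply: (ge0_ler_powR h0 _ _ hm); rewrite nnegrE ?ler0n ?exprn_ge0 ?ltW.
Qed.

Theorem proposition5p3 (R : realType) (p : R) (n : nat) (e : rel 'I_n)
    (s : seq R) :
  0 < p -> p < 1 -> simple_graph e ->
  is_eigenvalue_list (adjmx R e) s ->
  2 * ((num_edges e)%:R `^ (p / 2)) <= p_energy s p.
Proof.
move=> p0 p1 G hs.
have s0 : \sum_(x <- s) x = 0.
  by rewrite -(trace_eig _ _ _ _ hs) (tr_adj _ _ _ G).
have s2 : \sum_(x <- s) x * x = (2 * num_edges e)%:R.
  have hq : char_poly (adjmx R e *m adjmx R e) =
      \prod_(x <- [seq y * y | y <- s]) ('X - x%:P).
    by rewrite big_map; exact: sq_char.
  by rewrite -(big_map (fun y => y * y) xpredT id) -(trace_eig _ _ _ _ hq) (tr_adj2 _ _ _ G).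
exact: energy_bound.
Qed.
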